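(* Under the standing setting and assumptions (A1)–(A3) described in the context, assume $\mathcal A$ is polyhedral and represented by $\varphi_1,\dots,\varphi_m\in\mathcal X'_+$, and for $X\in\mathcal X$ set $I_{\mathcal A}(X)=\{i\in\{1,\dots,m\}: \varphi_i(X)=\sigma_{\mathcal A}(\varphi_i)\}$. Then the following are equivalent: (a) $|\mathcal R(X)|=1$ for every $X\in\mathcal X$; (b) $\ker(\pi)\cap\bigcap_{i\in I_{\mathcal A}(X)}\ker(\varphi_i)=\{0\}$ for every $X\in\partial\mathcal A\cap\partial(\mathcal A+\ker(\pi))$.
   Context: Let $\mathcal X$ be a Hausdorff, first countable, locally convex topological vector space over $\mathbb R$ with dual $\mathcal X'$, partially ordered by a partial order $\geq$ with positive cone $\mathcal X_+=\{X\in\mathcal X: X\geq 0\}$, and $\mathcal X'_+=\{\varphi\in\mathcal X':\varphi(X)\geq0\ \forall X\in\mathcal X_+\}$. Let $\mathcal M\subset\mathcal X$ be a vector subspace with $1<\dim\mathcal M<\infty$, carrying the relative topology, and let $\pi:\mathcal M\to\mathbb R$ be linear with $\ker(\pi)=\{Z\in\mathcal M:\pi(Z)=0\}$. Standing assumptions: (A1) there is $U\in\mathcal M\cap\mathcal X_+$ with $\pi(U)=1$; (A2) $\mathcal A\subsetneq\mathcal X$ is closed, contains $0$, and satisfies $\mathcal A+\mathcal X_+\subset\mathcal A$; (A3) the map $\rho(X)=\inf\{\pi(Z): Z\in\mathcal M,\ X+Z\in\mathcal A\}$ is finitely valued and continuous on $\mathcal X$. The optimal payoff map is $\mathcal R(X)=\{Z\in\mathcal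 M: X+Z\in\mathcal A,\ \pi(Z)=\rho(X)\}$; $|\cdot|$ is cardinality. The support function is $\sigma_{\mathcal A}(\varphi)=\inf_{X\in\mathcal A}\varphi(X)$. $\mathcal A$ is polyhedral and represented by $\varphi_1,\dots,\varphi_m$ if $\mathcal A=\bigcap_{i=1}^m\{X\in\mathcal X:\varphi_i(X)\geq\alpha_i\}$ for some $\alpha_i\in\mathbb R$ (equivalently, $\mathcal A=\bigcap_{i=1}^m\{X:\varphi_i(X)\geq\sigma_{\mathcal A}(\varphi_i)\}$). $\ker(\varphi_i)$ is the kernel of $\varphi_i$. $\partial$ denotes boundary in $\mathcal X$. *)

(* Defs.v *)
From HB Require Import structures.
From mathcomp Require Import all_boot all_order all_algebra.
From mathcomp Require Import all_classical all_reals all_analysis.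
Set Implicit Arguments. Unset Strict Implicit. Unset Printing Implicit Defensive.
Import Order.TTheory GRing.Theory Num.Theory numFieldTopology.Exports numFieldNormedType.Exports.
Local Open Scope classical_set_scope.
Local Open Scope ring_scope.

Section Defs.
Context {R : realType} {E : tvsType R}.

Definition first_countable : Prop :=
  forall x : E, exists B : nat -> set E,
    (forall n, nbhs x (B n)) /\ (forall U, nbhs x U -> exists n, B n `<=` U).

Definition topo_boundary (A : set E) : set E := closure A `\` interior A.

Definition vector_partial_order (le : E -> E -> Prop) : Prop :=
  [/\ forall x, le x x,
      forall x y, le x y -> le y x -> x = y,
      forall x y z, le x y -> le y z -> le x z,
      forall x y z, le x y -> le (x + z) (y + z)
    & forall (a : R) x y, 0 <= a -> le x y -> le (a *: x) (a *: y)].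

Definition pos_cone (le : E -> E -> Prop) : set E := [set X | le 0 X].

Definition cont_lin_functional (phi : E -> R) : Prop :=
  [/\ forall x y, phi (x + y) = phi x + phi y,
      forall (a : R) x, phi (a *: x) = a * phi x
    & continuous phi].

Definition pos_dual (le : E -> E -> Prop) (phi : E -> R) : Prop :=
  cont_lin_functional phi /\ (forall X, pos_cone le X -> 0 <= phi X).

Definition lin_indep (d : nat) (b : 'I_d -> E) : Prop :=
  forall c : 'I_d -> R, \sum_(i < d) c i *: b i = 0 -> forall i, c i = 0.
Definition fspan (d : nat) (b : 'I_d -> E) : set E :=
  [set \sum_(i < d) c i *: b i | c in [set: 'I_d -> R]].
Definition finite_dim_subspace_of_dim (M : set E) (d : nat) : Prop :=
  exists b : 'I_d -> E, lin_indep b /\ M = fspan b.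

(* pi : M -> R linear (only its values on M matter) *)
Definition linear_on (M : set E) (pi : E -> R) : Prop :=
  (forall x y, M x -> M y -> pi (x + y) = pi x + pi y) /\
  (forall (a : R) x, M x -> pi (a *: x) = a * pi x).

Definition kerpi (M : set E) (pi : E -> R) : set E := [set Z | M Z /\ pi Z = 0].

Definition rho_set (M : set E) (pi : E -> R) (A : set E) (X : E) : set R :=
  [set pi Z | Z in [set Z | M Z /\ A (X + Z)]].

Definition rho (M : set E) (pi : E -> R) (A : set E) (X : E) : R :=
  inf (rho_set M pi A X).

(* (A3): rho is finitely valued (the inf is over a nonempty set bounded below) *)
Definition rho_finite (M : set E) (pi : E -> R) (A : set E) : Prop :=
  forall X, rho_set M pi A X !=set0 /\ has_lbound (rho_set M pi A X).

Definition optR (M : set E) (pi : E -> R) (A : set E) (X : E) : set E :=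
  [set Z | M Z /\ A (X + Z) /\ pi Z = rho M pi A X].

Definition sigmaA (A : set E) (phi : E -> R) : R := inf [set phi X | X in A].

Definition mink_sum (A B : set E) : set E := [set a + b | a in A & b in B].

Definition polyhedral_rep (A : set E) (m : nat) (phi : 'I_m -> E -> R) : Prop :=
  exists alpha : 'I_m -> R,
    A = \bigcap_(i in [set: 'I_m]) [set X | alpha i <= phi i X].

Definition active_set (A : set E) (m : nat) (phi : 'I_m -> E -> R) (X : E)
  : set 'I_m := [set i | phi i X = sigmaA A (phi i)].

End Defs.

(* Main.v *)
Require Import Defs.
From HB Require Import structures.
From mathcomp Require Import all_boot all_order all_algebra.
From mathcomp Require Import all_classical all_reals all_analysis.
From mathcomp Require Import ring lra.
Import Order.TTheory GRing.Theory Num.Theory numFieldTopology.Exports numFieldNormedType.Exports.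
Local Open Scope classical_set_scope.
Local Open Scope ring_scope.
Section LP.
Context {R : realFieldType} {V : lmodType R}.

Definition aff_closed (C : set V) :=
  forall x y (t : R), C x -> C y -> C (t *: x + (1 - t) *: y).
Definition aff_on (C : set V) (f : V -> R) :=
  forall x y (t : R), C x -> C y -> f (t *: x + (1 - t) *: y) = t * f x + (1 - t) * f y.
Fixpoint sat (s : seq ((V -> R) * R)) (v : V) : Prop :=
  if s is c :: s' then c.2 <= c.1 v /\ sat s' v else True.
Fixpoint all_aff (C : set V) (s : seq ((V -> R) * R)) : Prop :=
  if s is c :: s' then aff_on C c.1 /\ all_aff C s' else True.

Lemma all_affS (C C' : set V) s : C' `<=` C -> all_aff C s -> all_aff C' s.
Proof.
move=> sub; elim: s => //= c s IH [h1 h2]; split; last exact: IH.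
by move=> x y t Cx Cy; apply: h1; apply: sub.
Qed.

Lemma sat_convex (C : set V) s x y (t : R) : all_aff C s -> C x -> C y ->
  0 <= t <= 1 -> sat s x -> sat s y -> sat s (t *: x + (1 - t) *: y).
Proof.
move=> + Cx Cy /andP[t0 t1]; elim: s => //= c s IH [ha hs] [cx sx] [cy sy].
split; last exact: IH.
rewrite ha //.
have -> : c.2 = t * c.2 + (1 - t) * c.2 by ring.
by apply: lerD; apply: ler_wpM2l => //; rewrite subr_ge0.
Qed.

Lemma lp_attain (s : seq ((V -> R) * R)) : forall (C : set V) (p : V -> R),
  aff_closed C -> aff_on C p -> all_aff C s ->
  (exists v, C v /\ sat s v) ->
  (exists L, forall v, C v -> sat s v -> L <= p v) ->
  exists w, C w /\ sat s w /\ forall v, C v -> sat s v -> p w <= p v.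
Proof.
elim: s => [|[g a] s IH] C p Caff paff saff [v0 [Cv0 sv0]] [L hL].
  exists v0; split => //; split => // v Cv _.
  rewrite leNgt; apply/negP => hlt.
  pose t := (p v0 - L + 1) / (p v0 - p v).
  have hpos : 0 < p v0 - p v by rewrite subr_gt0.
  have := hL (t *: v + (1 - t) *: v0) (Caff _ _ _ Cv Cv0) I.
  rewrite paff // /t.
  have -> : (p v0 - L + 1) / (p v0 - p v) * p v + (1 - (p v0 - L + 1) / (p v0 - p v)) * p v0
     = p v0 - (p v0 - L + 1) / (p v0 - p v) * (p v0 - p v) by ring.
  rewrite divfK ?gt_eqF //.
  have -> : p v0 - (p v0 - L + 1) = L - 1 by ring.
  by move=> h; lra.
simpl in saff; case: saff => gaff saff.
have [[w hw]|[vv [Cvv [svv [gvv pvv]]]]] : (exists w, C w /\ sat ((g, a) :: s) w /\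
      forall v, C v -> sat ((g, a) :: s) v -> p w <= p v) \/
    exists vv, C vv /\ sat s vv /\ g vv < a /\
    forall v, C v -> sat ((g, a) :: s) v -> p vv <= p v.
- have [[L' hL']|nb] := pselect (exists L', forall v, C v -> sat s v -> L' <= p v).
    have [w [Cw [sw hw]]] := IH C p Caff paff saff
      (ex_intro _ v0 (conj Cv0 sv0.2)) (ex_intro _ L' hL').
    case: (ltP (g w) a) => gw.
      right; exists w; split => //; split => //; split => // v Cv [_ sv]; exact: hw.
    left; exists w; split => //; split => // v Cv [_ sv]; exact: hw.
  right.
  have [v [Cv [sv pv]]] : exists v, C v /\ sat s v /\ p v < L.
    apply: contrapT => hn; apply: nb; exists L => v Cv sv.
    rewrite leNgt; apply/negP => hlt; apply: hn; exists v; split => //.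
  exists v; split => //; split => //; split.
    rewrite ltNge; apply/negP => hga.
    by have := hL v Cv (conj hga sv); rewrite leNgt pv.
  by move=> v' Cv' sv'; apply: ltW; apply: lt_le_trans pv (hL _ Cv' sv').
- by exists w.
pose C' := [set x | C x /\ g x = a].
have C'aff : aff_closed C'.
  move=> x y t [Cx gx] [Cy gy]; split; first exact: Caff.
  by rewrite gaff // gx gy; ring.
have paff' : aff_on C' p by move=> x y t [Cx _] [Cy _]; apply: paff.
have saff' : all_aff C' s by apply: all_affS saff => x [].
have build : forall x, C x -> sat ((g, a) :: s) x -> a < g x ->
    exists u, C' u /\ sat s u /\ p u <= p x.
  move=> x Cx [/= gx sx] ax.
  pose l := (g x - a) / (g x - g vv).
  have hd : 0 < g x - g vv by rewrite subr_gt0; apply: lt_trans ax.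
  have l0 : 0 <= l by rewrite /l; apply: divr_ge0; lra.
  have l1 : l <= 1.
    by rewrite /l ler_pdivrMr // mul1r; lra.
  exists (l *: vv + (1 - l) *: x); split; [split|split].
  - exact: Caff.
  - rewrite gaff //.
    have -> : l * g vv + (1 - l) * g x = g x - l * (g x - g vv) by ring.
    by rewrite /l divfK ?gt_eqF //; ring.
  - by apply: (@sat_convex C s vv x l saff) => //; apply/andP.
  - rewrite paff //.
    have := pvv x Cx (conj gx sx) => hp.
    have -> : l * p vv + (1 - l) * p x = p x + l * (p vv - p x) by ring.
    have : 0 <= l * (p x - p vv) by apply: mulr_ge0 => //; lra.
    lra.
have [w [[Cw gw] [sw hw]]] : exists w, C' w /\ sat s w /\
    forall v, C' v -> sat s v -> p w <= p v.
  apply: IH => //.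
    case: (ltrgtP a (g v0)) => h.
    - have [u [C'u [su _]]] := build v0 Cv0 sv0 h; by exists u.
    - by case: sv0 => /= h1 _; lra.
    - by exists v0; split; [split|case: sv0].
  exists L => v [Cv gv] sv; apply: hL => //; split => //=; by rewrite gv.
exists w; split => //; split; first by split => //=; rewrite gw.
move=> v Cv sv.
case: (ltrgtP a (g v)) => h.
- have [u [C'u [su pu]]] := build v Cv sv h.
  exact: le_trans (hw _ C'u su) pu.
- by case: sv => /= h1 _; lra.
- by apply: hw; [split|case: sv].
Qed.
End LP.

Lemma sat_map (R : realFieldType) (V : lmodType R) (I : eqType) (F : I -> (V -> R) * R) (l : seq I) v :
  sat [seq F i | i <- l] v <-> (forall i, i \in l -> (F i).2 <= (F i).1 v).
Proof.
elim: l => [|j l IH] /=; first by split => // _ i; rewrite in_nil.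
split.
  move=> [h1 /IH h2] i; rewrite in_cons => /orP[/eqP->|il] //; exact: h2.
move=> h; split; first by apply: h; rewrite mem_head.
by apply/IH => i il; apply: h; rewrite in_cons il orbT.
Qed.

Lemma all_aff_map (R : realFieldType) (V : lmodType R) (I : Type) (C : set V) (F : I -> (V -> R) * R) (l : seq I) :
  (forall i, aff_on C (F i).1) -> all_aff C [seq F i | i <- l].
Proof. by move=> h; elim: l => //= j l IH; split. Qed.

Theorem mainTheorem12 (R : realType) (E : tvsType R)
  (le : E -> E -> Prop) (M : set E) (pi : E -> R) (A : set E)
  (m : nat) (phi : 'I_m -> E -> R) :
  hausdorff_space E ->
  first_countable (E := E) ->
  vector_partial_order le ->
  (exists d : nat, (1 < d)%N /\ finite_dim_subspace_of_dim M d) ->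
  linear_on M pi ->
  (* (A1) *)
  (exists U, M U /\ pos_cone le U /\ pi U = 1) ->
  (* (A2) *)
  A <> setT -> closed A -> A 0 ->
  (forall X P, A X -> pos_cone le P -> A (X + P)) ->
  (* (A3) *)
  rho_finite M pi A -> continuous (rho M pi A) ->
  (* polyhedral, represented by positive continuous functionals *)
  (forall i, pos_dual le (phi i)) ->
  polyhedral_rep A phi ->
  ((forall X : E, exists Z0, optR M pi A X = [set Z0]) <->
   (forall X : E, topo_boundary A X -> topo_boundary (mink_sum A (kerpi M pi)) X ->
      kerpi M pi `&` \bigcap_(i in active_set A phi X) [set Z | phi i Z = 0]
      = [set 0])).
Proof.
move=> _ _ [_ _ _ _ le_scale] [d [_ [b [_ Mdef]]]] [piD piZ] [U [MU [posU piU]]]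
  _ Aclosed A0 Amono rfin rcont phipos [alpha Adef].
have MD : forall x y, M x -> M y -> M (x + y).
  rewrite Mdef => x y [c _ <-] [c' _ <-]; exists (fun i => c i + c' i) => //.
  by rewrite -big_split /=; apply: eq_bigr => i _; rewrite scalerDl.
have MZ : forall (a : R) x, M x -> M (a *: x).
  rewrite Mdef => a x [c _ <-]; exists (fun i => a * c i) => //.
  by rewrite scaler_sumr; apply: eq_bigr => i _; rewrite scalerA.
have M0 : M 0 by rewrite -(scale0r U); apply: MZ.
have MB : forall x y, M x -> M y -> M (x - y).
  by move=> x y Mx My; apply: MD => //; rewrite -scaleN1r; apply: MZ.
have pi0 : pi 0 = 0 by rewrite -(scale0r 0) piZ // mul0r.
have piB : forall x y, M x -> M y -> pi (x - y) = pi x - pi y.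
  move=> x y Mx My; rewrite piD //; last by rewrite -scaleN1r; apply: MZ.
  by rewrite -scaleN1r piZ // mulN1r.
have phiD : forall i x y, phi i (x + y) = phi i x + phi i y.
  by move=> i; have [[]] := phipos i.
have phiZ : forall i (a : R) x, phi i (a *: x) = a * phi i x.
  by move=> i; have [[]] := phipos i.
have phi0 : forall i, phi i 0 = 0 by move=> i; rewrite -(scale0r 0) phiZ mul0r.
have inA : forall X, A X <-> forall i, alpha i <= phi i X.
  by move=> X; rewrite Adef; split => [h i|h i _]; [exact: h|exact: h].
have sig_lb : forall i X, A X -> sigmaA A (phi i) <= phi i X.
  move=> i X AX; apply: ge_inf; last by exists X.
  by exists (alpha i) => _ [Y /inA AY <-].
have alpha_sig : forall i, alpha i <= sigmaA A (phi i).
  move=> i; apply: lb_le_inf; first by exists (phi i 0), 0.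
  by move=> _ [Y /inA AY <-].
have rho_le : forall X Z, M Z -> A (X + Z) -> rho M pi A X <= pi Z.
  move=> X Z MZ' AXZ; apply: ge_inf; first exact: (rfin X).2.
  by exists Z.
have rho_att : forall X, exists Z, M Z /\ A (X + Z) /\ pi Z = rho M pi A X.
  move=> X.
  pose F := fun i : 'I_m => ((fun Z => phi i (X + Z)), alpha i).
  have satE : forall Z, sat [seq F i | i <- enum 'I_m] Z <-> A (X + Z).
    move=> Z; rewrite sat_map inA; split => h i; first by apply: h; rewrite mem_enum.
    by move=> _; apply: h.
  have h1 : all_aff M [seq F i | i <- enum 'I_m].
    apply: all_aff_map => i x y t Mx My /=.
    rewrite /F /= (phiD i X (t *: x + (1 - t) *: y)) (phiD i (t *: x) ((1 - t) *: y)) (phiZ i t x) (phiZ i (1 - t) y) (phiD i X x) (phiD i X y).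
    have -> : phi i X = t * phi i X + (1 - t) * phi i X by ring.
    ring.
  have h2 : exists v, M v /\ sat [seq F i | i <- enum 'I_m] v.
    have [_ [Z [MZ' AXZ] _]] := (rfin X).1.
    by exists Z; split => //; apply/satE.
  have h3 : exists L, forall v, M v -> sat [seq F i | i <- enum 'I_m] v -> L <= pi v.
    have [L hL] := (rfin X).2.
    by exists L => v Mv /satE AXv; apply: hL; exists v.
  have [w [Mw [sw hw]]] := @lp_attain R E [seq F i | i <- enum 'I_m] M pi
    (fun x y t Mx My => MD _ _ (MZ _ _ Mx) (MZ _ _ My))
    (fun x y t Mx My => etrans (piD _ _ (MZ _ _ Mx) (MZ _ _ My)) (congr2 +%R (piZ _ _ Mx) (piZ _ _ My)))
    h1 h2 h3.
  have AXw : A (X + w) by apply/satE.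
  exists w; split => //; split => //; apply/le_anti/andP; split; last exact: rho_le.
  apply: lb_le_inf; first by have [] := rfin X.
  by move=> _ [Z [MZ' AXZ] <-]; apply: hw => //; apply/satE.
pose K := kerpi M pi.
have noint : forall Y, (forall Z, M Z -> A (Y + Z) -> 0 <= pi Z) ->
    ~ nbhs Y (mink_sum A K).
  move=> Y hY hN.
  have /= := add_continuous (Y, 0) (mink_sum A K).
  rewrite addr0 => /(_ hN) [] /= B [B1 B2] BU.
  have /= := scale_continuous (0, U) B.2.
  rewrite scale0r => /(_ B2) [] /= C [C1 C2] CU.
  have hC : (0:R)^'- (fun t => C.1 t /\ t < 0).
    apply: filterI; last exact: nbhs_left_lt.
    by apply: filterS C1 => t ct _.
  have [t [Ct tlt0]] := filter_ex hC.
  have Bt : B.2 (t *: U) by apply: (CU (t, U)); split => //; exact: nbhs_singleton.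
  have [a Aa [k [Mk pik] e]] : mink_sum A K (Y + t *: U).
    by apply: (BU (Y, t *: U)); split => //; exact: nbhs_singleton.
  have ea : a = Y + t *: U - k by rewrite -e addrK.
  have MtU : M (t *: U) by apply: MZ.
  have := hY (t *: U - k) (MB _ _ MtU Mk).
  rewrite addrA -ea => /(_ Aa).
  rewrite piB // pik piZ // piU; lra.
split.
- move=> ha X [clA _] [_ nintK].
  have AX : A X by move/closure_id: Aclosed => {1}->.
  have rX0 : rho M pi A X = 0.
    apply/le_anti/andP; split.
      by rewrite -pi0; apply: rho_le => //; rewrite addr0.
    rewrite leNgt; apply/negP => rneg; apply: nintK.
    have hnb : nbhs (rho M pi A X) [set r : R | r < 0].
      by apply: open_nbhs_nbhs; split => //; exact: open_lt.
    have hpre : nbhs X (rho M pi A @^-1` [set r : R | r < 0]) := rcont X _ hnb.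
    rewrite /interior /=; apply: filterS hpre => Y /= rY.
    have [Z [MZ' [AYZ piZ']]] := rho_att Y.
    pose c := - rho M pi A Y.
    have c0 : 0 <= c by rewrite /c oppr_ge0 ltW.
    have posc : pos_cone le (c *: U).
      by have := le_scale c 0 U c0 posU; rewrite scaler0.
    exists (Y + (Z + c *: U)); first by rewrite addrA; apply: Amono.
    exists (0 - (Z + c *: U)); last by rewrite sub0r addrK.
    have MZc : M (Z + c *: U) by apply: MD => //; apply: MZ.
    split; first exact: MB.
    rewrite piB // pi0 piD //; last exact: MZ.
    by rewrite piZ // piZ' piU /c; lra.
  have [Z0 hZ0] := ha X.
  have opt0 : optR M pi A X 0 by split => //; split; [rewrite addr0|rewrite pi0 rX0].
  have Z00 : 0 = Z0 by move: opt0; rewrite hZ0.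
  apply/seteqP; split => Z; last first.
    move=> -> /=; split; first by split.
    by move=> i _ /=; rewrite phi0.
  move=> [[MZ' piZ0] hact].
  have hnear2 : (0:R)^'+ (fun t => forall i, alpha i <= phi i X + t * phi i Z).
    apply: (@filter_forall R 'I_m (fun i t => alpha i <= phi i X + t * phi i Z) (0:R)^'+ _) => i.
    have [hpos|hneg] := leP 0 (phi i Z).
      apply: filterS (nbhs_right_gt 0) => t t0.
      have := (inA X).1 AX i.
      have : 0 <= t * phi i Z by apply: mulr_ge0 => //; exact: ltW.
      lra.
    have nact : ~ active_set A phi X i.
      by move=> hi; have := hact i hi; rewrite /= => h; move: hneg; rewrite h ltxx.
    have gt : alpha i < phi i X.
      have := sig_lb i X AX; have := alpha_sig i.
      rewrite /active_set /= in nact.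
      move=> h1 h2; rewrite (le_lt_trans h1) //.
      by rewrite lt_neqAle h2 andbT; apply/eqP => h; apply: nact; rewrite h.
    have q0 : 0 < (phi i X - alpha i) / (- phi i Z).
      by apply: divr_gt0; lra.
    apply: filterS (nbhs_right_lt q0) => t.
    rewrite ltr_pdivlMr; last by lra.
    lra.
  have hnear : (0:R)^'+ (fun t => 0 < t /\ forall i, alpha i <= phi i X + t * phi i Z).
    by apply: filterS (filterI (nbhs_right_gt 0) hnear2) => t [].
  have [t [t0 ht]] := filter_ex hnear.
  have optt : optR M pi A X (t *: Z).
    split; first exact: MZ.
    split; last by rewrite piZ // piZ0 mulr0 rX0.
    by apply/inA => i; rewrite phiD phiZ; exact: ht.
  have tZ0 : t *: Z = 0 by move: optt; rewrite hZ0 /= => ->.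
  by rewrite -[Z]scale1r -(mulVf (lt0r_neq0 t0)) -scalerA tZ0 scaler0.
- move=> hb X.
  have [w [Mw [AXw piw]]] := rho_att X.
  exists w; apply/seteqP; split; last by move=> _ ->.
  move=> Z [MZ' [AXZ piZr]] /=.
  pose mid := 2^-1 *: (Z + w).
  have Mmid : M mid by apply: MZ; apply: MD.
  have pimid : pi mid = rho M pi A X.
    rewrite /mid piZ; last exact: MD.
    rewrite piD // piZr piw.
    set r := rho M pi A X.
    have -> : r + r = r *+ 2 by rewrite mulr2n.
    by rewrite -mulr_natr; field.
  pose Y := X + mid.
  have hYmin : forall Z', M Z' -> A (Y + Z') -> 0 <= pi Z'.
    move=> Z' MZ'' AYZ.
    have := rho_le X (mid + Z') (MD _ _ Mmid MZ'').
    rewrite addrA => /(_ AYZ).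
    by rewrite piD // pimid; lra.
  have phiY : forall i, phi i Y = phi i X + 2^-1 * (phi i Z + phi i w).
    by move=> i; rewrite /Y /mid phiD phiZ phiD.
  have AY : A Y.
    apply/inA => i; rewrite phiY.
    have := (inA _).1 AXZ i; have := (inA _).1 AXw i; rewrite !phiD.
    lra.
  have inAK : forall y, A y -> mink_sum A K y.
    by move=> y Ay; exists y => //; exists 0; [split|rewrite addr0].
  have bA : topo_boundary A Y.
    split; first exact: subset_closure.
    by move=> hi; apply: (noint Y hYmin); apply: filterS hi.
  have bAK : topo_boundary (mink_sum A K) Y.
    split; first by apply: subset_closure; apply: inAK.
    exact: noint.
  have heq := hb Y bA bAK.
  have phiN : forall i x, phi i (- x) = - phi i x.
    by move=> i x; rewrite -scaleN1r phiZ mulN1r.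
  have : (K `&` \bigcap_(i in active_set A phi Y) [set Z | phi i Z = 0]) (Z - w).
    split; first by split; [exact: MB|rewrite piB // piZr piw subrr].
    move=> i /= hi; rewrite phiD phiN.
    have := sig_lb i _ AXZ; have := sig_lb i _ AXw.
    rewrite /active_set /= in hi; rewrite -hi phiY !phiD.
    lra.
  by rewrite /K heq /= => /eqP; rewrite subr_eq0 => /eqP.
Qed.
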